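(* Let $p$ be any probability distribution on $\mathbb{N}$, let $\delta>0$ and let $k\ge2$ be an integer. Let $X_1^n$ be generated i.i.d. with marginal $p$ and let $q=q(X^n)$ be the empirical distribution of $X_1^n$. Then \[p\Big(|q(X^n)-p|_1>\delta\ \text{ and }\ 2F_q^{-1}(1-\delta/6)\le k\Big)\le(2^k-2)\exp\Big(-\frac{n\delta^2}{18}\Big).\]
   Context: $|\cdot|_1$ is the $\ell_1$ distance. For a distribution $r$ on $\mathbb{N}$, the (non-standard) cumulative distribution function $F_r:\mathbb{R}^+\cup\{\infty\}\to[0,1]$ is defined as the usual CDF $F_r(y)=r(\{0,\ldots,y\})$ at support points $y$ of $r$, by linear interpolation between consecutive support points, and $F_r(\infty)=1$; $F_r^{-1}:[0,1]\to\mathbb{R}^+\cup\{\infty\}$ is its inverse, with $F_r^{-1}(x)=0$ for $0\le x<F_r(0)$, $F_r^{-1}(1)=\infty$ if $r$ has infinite support, and otherwise $F_r^{-1}(1)$ the smallest natural number $y$ with $F_r(y)=1$. *)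

(* Defs.v *)
From HB Require Import structures.
From mathcomp Require Import all_boot all_order all_algebra.
From mathcomp Require Import all_classical all_reals all_analysis.
Set Implicit Arguments. Unset Strict Implicit. Unset Printing Implicit Defensive.
Import Order.TTheory GRing.Theory Num.Theory.
Local Open Scope classical_set_scope.
Local Open Scope ring_scope.

Section Defs.
Variable R : realType.

Definition is_distr (p : nat -> R) : Prop :=
  (forall i, 0 <= p i) /\ (\esum_(i in [set: nat]) (p i)%:E = 1%E).

Definition cdf_nat (r : nat -> R) (y : nat) : R := \sum_(0 <= i < y.+1) r i.

Definition interp_pt (r : nat -> R) (i : nat) : bool := (i == 0)%N || (0 < r i).

Definition pt_below (r : nat -> R) (y : R) : nat :=
  \max_(i < (Num.truncn y).+1 | interp_pt r i) (i : nat).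

(* The non-standard CDF F_r on R^+: usual CDF at (0 and) support points,
   linear interpolation between consecutive such points, and constant
   (= F_r at the last support point) beyond the last support point. *)
Definition Fcdf (r : nat -> R) (y : R) : R :=
  let a := pt_below r y in
  match pselect (exists j, interp_pt r j && (y < j%:R)) with
  | left H =>
      let b := ex_minn H in
      cdf_nat r a + (y - a%:R) / (b%:R - a%:R) * (cdf_nat r b - cdf_nat r a)
  | right _ => cdf_nat r a
  end.

Definition Finv (r : nat -> R) (x : R) : \bar R :=
  if x < Fcdf r 0 then 0%E
  else if x == 1 then
    match pselect (exists y : nat, Fcdf r y%:R == 1) with
    | left H => ((ex_minn H)%:R)%:E
    | right _ => +oo%E
    end
  else (inf [set y : R | 0 <= y /\ Fcdf r y = x])%:E.

Definition empirical (n : nat) (x : n.-tuple nat) (y : nat) : R :=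
  (count (pred1 y) x)%:R / n%:R.

Definition l1dist (q p : nat -> R) : \bar R :=
  \esum_(y in [set: nat]) (`|q y - p y|)%:E.

Definition iid_prob (p : nat -> R) (n : nat) (E : set (n.-tuple nat)) : \bar R :=
  \esum_(x in E) (\prod_(i < n) p (tnth x i))%:E.

End Defs.

Arguments is_distr {R}.
Arguments cdf_nat {R}.
Arguments interp_pt {R}.
Arguments pt_below {R}.
Arguments Fcdf {R}.
Arguments Finv {R}.
Arguments empirical {R n}.
Arguments l1dist {R}.
Arguments iid_prob {R} p {n}.

(* Main.v *)
Require Import Defs.
From HB Require Import structures.
From mathcomp Require Import all_boot all_order all_algebra.
From mathcomp Require Import all_classical all_reals all_analysis.
Import Order.TTheory GRing.Theory Num.Theory.
Local Open Scope classical_set_scope.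
Local Open Scope ring_scope.

From mathcomp Require Import ring lra zify.
Set Implicit Arguments. Unset Strict Implicit.

Section HH.
Variable R : realType.

Lemma is_derive_comp1 (f g : R -> R) (x df dg : R) :
  is_derive x 1 f df -> is_derive (f x) 1 g dg -> is_derive x 1 (g \o f) (dg * df).
Proof.
move=> [Hf Ef] [Hg Eg].
have Hc : derivable (g \o f) x 1.
  apply/derivable1_diffP; apply: differentiable_comp; exact/derivable1_diffP.
apply: DeriveDef => //.
have e := derive1_comp Hf Hg.
rewrite !derive1E in e.
by rewrite e Ef Eg.
Qed.

Lemma is_deriveV1 (f : R -> R) (x df : R) : f x != 0 ->
  is_derive x 1 f df -> is_derive x 1 (fun y => (f y)^-1) (- (f x) ^- 2 * df).
Proof.
move=> fx0 [Hf Ef]; apply: DeriveDef; first exact: derivableV.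
by rewrite deriveV // Ef.
Qed.


Lemma isdD (f g : R -> R) (x df dg : R) : is_derive x 1 f df -> is_derive x 1 g dg ->
  is_derive x 1 (fun y => f y + g y) (df + dg).
Proof. move=> h1 h2; exact: is_deriveD. Qed.
Lemma isdB (f g : R -> R) (x df dg : R) : is_derive x 1 f df -> is_derive x 1 g dg ->
  is_derive x 1 (fun y => f y - g y) (df - dg).
Proof. move=> h1 h2; exact: is_deriveB. Qed.
Lemma isdM (f g : R -> R) (x df dg : R) : is_derive x 1 f df -> is_derive x 1 g dg ->
  is_derive x 1 (fun y => f y * g y) (f x * dg + g x * df).
Proof. move=> h1 h2; exact: is_deriveM. Qed.
Lemma isdC (c x : R) : is_derive x 1 (fun _ : R => c) 0.
Proof. exact: is_derive_cst. Qed.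
Lemma isdI (x : R) : is_derive x 1 (fun y : R => y) 1.
Proof. exact: is_derive_id. Qed.
Lemma isdE (x : R) : is_derive x 1 (fun y : R => expR y) (expR x).
Proof. exact: is_derive_expR. Qed.
Lemma isdL (f : R -> R) (x df : R) : 0 < f x -> is_derive x 1 f df ->
  is_derive x 1 (fun y => ln (f y)) ((f x)^-1 * df).
Proof. move=> h1 h2; have h3 := @is_derive1_ln R _ h1. have h4 := @is_derive_comp1 f (@ln R) x df _ h2 h3. exact: h4. Qed.
Lemma isdV (f : R -> R) (x df : R) : f x != 0 -> is_derive x 1 f df ->
  is_derive x 1 (fun y => (f y)^-1) (- (f x) ^- 2 * df).
Proof. exact: is_deriveV1. Qed.
Lemma isd_eq (f : R -> R) (x df df' : R) : is_derive x 1 f df -> df = df' -> is_derive x 1 f df'.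
Proof. by move=> h <-. Qed.


Arguments isdC c x.
Arguments isdI x.
Arguments isdE x.
Lemma mexp_d (mu y : R) : is_derive y 1 (fun z => mu * expR z) (mu * expR y).
Proof. have h := isdM (isdC mu y) (isdE y). apply: (isd_eq h). by rewrite mulr0 addr0. Qed.

Lemma hoeff_lemma (mu s : R) : 0 <= mu -> mu <= 1 -> 0 <= s ->
  1 - mu + mu * expR s <= expR (mu * s + s * s / 8).
Proof.
move=> mu0 mu1 s0.
pose D := fun y : R => 1 - mu + mu * expR y.
have Dpos : forall y, 0 < D y.
  move=> y; rewrite /D; have := expR_gt0 y => e0.
  have [->|mu1'] := eqVneq mu 1; first by rewrite subrr add0r mul1r.
  have : mu < 1 by rewrite lt_neqAle mu1' mu1.
  move=> ?; have : 0 <= mu * expR y by rewrite mulr_ge0 // ltW.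
  lra.
have dD : forall y : R, is_derive y 1 D (mu * expR y).
  move=> y; have h := isdD (isdC (1 - mu) y) (mexp_d mu y); apply: (isd_eq h).
  by rewrite add0r.
pose g := fun y => mu * expR y * (D y)^-1 - mu - y / 4.
have dg : forall y : R, is_derive y 1 g
    (mu * expR y * (- (D y)^-2 * (mu * expR y)) + (D y)^-1 * (mu * expR y) - 4^-1).
  move=> y; have hD : D y != 0 by rewrite gt_eqF.
  have h := isdB (isdB (isdM (mexp_d mu y) (isdV hD (dD y))) (isdC mu y))
                 (isdM (isdI y) (isdC 4^-1 y)).
  apply: (isd_eq h).
  by rewrite subr0 mulr0 add0r mulr1.
have g'le0 : forall y : R, mu * expR y * (- (D y)^-2 * (mu * expR y)) + (D y)^-1 * (mu * expR y) - 4^-1 <= 0.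
  move=> y; set u := mu * expR y * (D y)^-1.
  have -> : mu * expR y * (- (D y)^-2 * (mu * expR y)) + (D y)^-1 * (mu * expR y) - 4^-1
     = - (u - 2^-1) ^+ 2.
    have hD : D y != 0 by rewrite gt_eqF.
    by rewrite /u; field.
  by rewrite oppr_le0 sqr_ge0.
have gle0 : forall y, 0 <= y -> g y <= 0.
  move=> y y0.
  have -> : 0 = g 0 by rewrite /g /D expR0 mulr1 !mul0r subr0 addrNK invr1 mulr1 subrr.
  have L := @ler0_derive1_nincry _ g 0; apply: L => //.
  - by move=> x _; rewrite derive1E; have [_ ->] := dg x.
  - apply: derivable_within_continuous => x _; by have [] := dg x.
pose f := fun y => ln (D y) - mu * y - y * y / 8.
have df : forall y : R, is_derive y 1 f (g y).
  move=> y; have h := isdB (isdB (isdL (Dpos y) (dD y)) (isdM (isdC mu y) (isdI y)))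
               (isdM (isdM (isdI y) (isdI y)) (isdC 8^-1 y)).
  apply: (isd_eq h).
  by rewrite /g; field; rewrite gt_eqF.
have fle0 : f s <= 0.

  have -> : 0 = f 0 by rewrite /f /D expR0 mulr1 addrNK ln1 mulr0 !mul0r !subr0.
  have L := @ler0_derive1_nincry _ f 0; apply: L => //.
  - move=> x; rewrite in_itv /= andbT => x0; rewrite derive1E; have [_ ->] := df x.
    by apply: gle0; apply: ltW.
  - apply: derivable_within_continuous => x _; by have [] := df x.
have : ln (D s) <= mu * s + s * s / 8 by move: fle0; rewrite /f; lra.
rewrite -ler_expR lnK //; exact: Dpos.
Qed.

End HH.

Section Det.
Variable R : realType.
Variable r : nat -> R.
Variable M : nat.
Hypothesis r0 : forall i, 0 <= r i.
Hypothesis rM : forall i, (M <= i)%N -> r i = 0.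
Hypothesis r1 : \sum_(0 <= i < M) r i = 1.

Lemma cdf_ge0 m : 0 <= cdf_nat r m.
Proof. by apply: sumr_ge0 => i _. Qed.

Lemma cdf_mono m m' : (m <= m')%N -> cdf_nat r m <= cdf_nat r m'.
Proof.
move=> mm; rewrite /cdf_nat (@big_cat_nat _ _ _ m.+1 0 m'.+1) //=.
by rewrite lerDl; apply: sumr_ge0 => i _.
Qed.

Lemma sum_all m : (M <= m)%N -> \sum_(0 <= i < m) r i = 1.
Proof.
move=> Mm; rewrite (@big_cat_nat _ _ _ M 0 m) //= r1 big_nat_cond big1 ?addr0 //.
by move=> i /andP[/andP[Mi _] _]; apply: rM.
Qed.

Lemma cdf_le1 m : cdf_nat r m <= 1.
Proof.
rewrite -(sum_all (m := maxn M m.+1)) ?leq_maxl //.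
rewrite /cdf_nat (@big_cat_nat _ _ _ m.+1 0 (maxn M m.+1)) //= ?leq_maxr //.
by rewrite lerDl; apply: sumr_ge0 => i _.
Qed.

Lemma interp0 : interp_pt r 0.
Proof. by []. Qed.

Lemma pb_le (y : R) : 0 <= y -> (pt_below r y)%:R <= y.
Proof.
move=> y0; apply: le_trans (_ : (Num.truncn y)%:R <= y); last by rewrite truncn_le.
rewrite ler_nat; apply/bigmax_leqP => i _; by rewrite -ltnS.
Qed.

Lemma pb_interp (y : R) : interp_pt r (pt_below r y).
Proof.
rewrite /pt_below.
have [|i0 Hi0 ->] := @eq_bigmax_cond _ (fun i : 'I_(Num.truncn y).+1 => interp_pt r i) (fun i => nat_of_ord i).
  by apply/card_gt0P; exists ord0.
by [].
Qed.

Lemma pb_max (y : R) j : 0 <= y -> interp_pt r j -> j%:R <= y -> (j <= pt_below r y)%N.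
Proof.
move=> y0 ij jy.
have jt : (j < (Num.truncn y).+1)%N by rewrite ltnS truncn_ge_nat.
exact: (@leq_bigmax_cond _ (fun i : 'I_(Num.truncn y).+1 => interp_pt r i) (fun i => nat_of_ord i) (Ordinal jt)).
Qed.


Lemma Fcdf_spec (y : R) :
  (~ (exists j, interp_pt r j && (y < j%:R)) /\ Fcdf r y = cdf_nat r (pt_below r y)) \/
  (exists b, [/\ interp_pt r b, y < b%:R,
     (forall j, interp_pt r j -> y < j%:R -> (b <= j)%N) &
     Fcdf r y = cdf_nat r (pt_below r y) + (y - (pt_below r y)%:R) / (b%:R - (pt_below r y)%:R)
        * (cdf_nat r b - cdf_nat r (pt_below r y))]).
Proof.
rewrite /Fcdf; case: pselect => H; last by left.
right; case: (ex_minnP H) => b /andP[ib yb] minb; exists b; split => //.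
by move=> j ij yj; apply: minb; rewrite ij yj.
Qed.

Lemma F0 : Fcdf r 0 = cdf_nat r 0.
Proof.
have pb0 : pt_below r 0 = 0%N.
  apply/eqP; rewrite -leqn0 -(ler_nat R); exact: pb_le.
case: (Fcdf_spec 0) => [[_ ->]|[b [_ _ _ ->]]]; rewrite pb0 //.
by rewrite subrr mul0r mul0r addr0.
Qed.


Lemma cdf_diff_ge0 m m' : (m <= m')%N -> 0 <= cdf_nat r m' - cdf_nat r m.
Proof. by move=> h; rewrite subr_ge0 cdf_mono. Qed.

Lemma S_nonempty (x0 : R) : cdf_nat r 0 <= x0 -> x0 < 1 ->
  exists y, 0 <= y /\ Fcdf r y = x0.
Proof.
move=> x0ge x0lt.
have ex : exists j, x0 < cdf_nat r j.
  by exists M; rewrite /cdf_nat sum_all.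
case: (ex_minnP ex) => b xb minb.
have b0 : (0 < b)%N.
  by case: b xb minb => [|//] xb _; move: x0ge; rewrite leNgt xb.
have xb1 : cdf_nat r b.-1 <= x0.
  by rewrite leNgt; apply/negP => /minb; rewrite -{1}(prednK b0) ltnn.
pose a0 := \max_(i < b | interp_pt r i) (i : nat).
have [i0 Hi0 a0E] : {i0 : 'I_b | interp_pt r i0 & a0 = i0}.
  apply: eq_bigmax_cond; apply/card_gt0P; exists (Ordinal b0); by [].
have a0b : (a0 < b)%N by rewrite a0E ltn_ord.
have ia0 : interp_pt r a0 by rewrite a0E.
have a0max : forall i, (i < b)%N -> interp_pt r i -> (i <= a0)%N.
  move=> i ib ii.
  exact: (@leq_bigmax_cond _ (fun i : 'I_b => interp_pt r i) (fun i => nat_of_ord i) (Ordinal ib)).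
have zb : forall i, (a0 < i)%N -> (i < b)%N -> r i = 0.
  move=> i ai ib; apply/eqP; rewrite eq_le r0 andbT leNgt; apply/negP => ri.
  have : interp_pt r i by rewrite /interp_pt ri orbT.
  by move/(a0max _ ib); rewrite leqNgt ai.
have cdfa : cdf_nat r a0 = cdf_nat r b.-1.
  have Z : \sum_(a0.+1 <= i < b.-1.+1) r i = 0.
    rewrite big_nat_cond big1 // => i /andP[/andP[ai ib] _].
    by apply: zb => //; rewrite -(prednK b0).
  rewrite /cdf_nat (@big_cat_nat _ _ _ a0.+1 0 b.-1.+1) //=; last by rewrite prednK.
  by rewrite Z addr0.
have rb : cdf_nat r b = cdf_nat r b.-1 + r b.
  by rewrite /cdf_nat big_nat_recr //= prednK.
have rbpos : 0 < r b by move: xb1 xb; rewrite rb; lra.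
have ib : interp_pt r b by rewrite /interp_pt rbpos orbT.
set D := cdf_nat r b - cdf_nat r a0.
have DE : D = r b by rewrite /D rb cdfa; ring.
set t := (x0 - cdf_nat r a0) / D.
have t0 : 0 <= t by rewrite /t; apply: divr_ge0; [rewrite cdfa | rewrite DE]; lra.
have t1 : t < 1.
  rewrite /t ltr_pdivrMr DE // mul1r; move: xb; rewrite rb cdfa. Show. lra.
have abR : a0%:R < b%:R :> R by rewrite ltr_nat.
set y := a0%:R + t * (b%:R - a0%:R).
have ya : a0%:R <= y by rewrite /y lerDl mulr_ge0 // subr_ge0 ltW.
have yb : y < b%:R.
  have : t * (b%:R - a0%:R) < b%:R - a0%:R.
    by rewrite gtr_pMl // subr_gt0.
  rewrite /y; lra.
have y0 : 0 <= y by apply: le_trans ya.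
have pbE : pt_below r y = a0.
  apply/eqP; rewrite eqn_leq pb_max // andbT.
  apply: a0max; last exact: pb_interp.
  by rewrite -(ltr_nat R); apply: le_lt_trans (pb_le y0) yb.
exists y; split => //.
case: (Fcdf_spec y) => [[H _]|[b' [ib' yb' minb' ->]]].
  by exfalso; apply: H; exists b; rewrite ib yb.
have bb : b' = b.
  apply/eqP; rewrite eqn_leq minb' //=.
  rewrite leqNgt; apply/negP => b'b.
  have := a0max _ b'b ib'; rewrite -(ler_nat R) => h; lra.
rewrite bb pbE.
have -> : y - a0%:R = t * (b%:R - a0%:R) by rewrite /y; ring.
have hba : b%:R - a0%:R != 0 :> R by rewrite subr_eq0 gt_eqF.
have hD : D != 0 by rewrite DE gt_eqF.
rewrite -/D mulrK; last by rewrite unitfE.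
rewrite /t divfK //; ring.
Qed.

Section Key.
Variables (k : nat) (e y : R).
Hypotheses (k2 : (2 <= k)%N) (e0 : 0 < e) (e1 : e <= 1/2) (y0 : 0 <= y)
  (yk : y < k%:R / 2 + e).

Let a := pt_below r y.
Ltac hy := have k2' := k2; have e0' := e0; have e1' := e1; have y0' := y0; have yk' := yk.
Let c := cdf_nat r k.-1.

Lemma kR : 2 <= k%:R :> R.
Proof. by rewrite ler_nat. Qed.

Lemma kk1 : k%:R = (k.-1)%:R + 1 :> R.
Proof. by rewrite natr1; congr (_%:R); lia. Qed.

Lemma ay : a%:R <= y.
Proof. exact: pb_le. Qed.

Lemma ak : (a <= k.-1)%N.
Proof.
have : a%:R < k%:R :> R.
  have := kR; have := ay. move=> h1 h2. have := yk. have := e1. lra.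
rewrite ltr_nat; lia.
Qed.

Lemma ca : cdf_nat r a <= c.
Proof. exact: cdf_mono ak. Qed.

Lemma key1 : (1 - c) * (1/2 - e / k%:R) <= 1 - Fcdf r y.
Proof.
hy.
have c1 : c <= 1 := cdf_le1 _.
have c0 : 0 <= c := cdf_ge0 _.
have ca0 : 0 <= cdf_nat r a := cdf_ge0 _.
have kR' := kR.
have ek : 0 <= e / k%:R by rewrite divr_ge0 // ltW.
have ek4 : e / k%:R <= 1/4.
  by rewrite ler_pdivrMr; lra.
have base : (1 - c) * (1/2 - e / k%:R) <= 1 - c.
  by rewrite ler_piMr; lra.
have := ca; have := ay.
case: (Fcdf_spec y) => [[_ ->]|[b [ib yb minb ->]]]; rewrite -/a => ay' ca'.
  lra.
have ab : a%:R < b%:R :> R by lra.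
have ba0 : 0 < b%:R - a%:R :> R by lra.
have cb1 : cdf_nat r b <= 1 := cdf_le1 _.
have dab : 0 <= cdf_nat r b - cdf_nat r a.
  by apply: cdf_diff_ge0; rewrite -(ler_nat R) ltW.
set rho := (y - a%:R) / (b%:R - a%:R).
have rho0 : 0 <= rho by apply: divr_ge0; lra.
have rho1 : rho <= 1 by rewrite ler_pdivrMr // mul1r; lra.
have [bk|kb] := leqP b k.-1.
  have cb : cdf_nat r b <= c := cdf_mono bk.
  have : rho * (cdf_nat r b - cdf_nat r a) <= cdf_nat r b - cdf_nat r a.
    by rewrite ler_piMl.
  lra.
have kbR : k%:R <= b%:R :> R by rewrite ler_nat -(prednK (ltnW k2')).
set tau := 1/2 + e / k%:R.
have tau0 : 0 <= tau by rewrite /tau; lra.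
have tau1 : tau <= 1 by rewrite /tau; lra.
have rhot : rho <= tau.
  rewrite ler_pdivrMr //.
  have t1 : tau * k%:R <= tau * b%:R by rewrite ler_wpM2l.
  have t2 : tau * a%:R <= a%:R by rewrite ler_piMl.
  have t3 : tau * k%:R = k%:R / 2 + e by rewrite /tau; field; lra.
  rewrite mulrBr; lra.
have h1 : rho * (cdf_nat r b - cdf_nat r a) <= rho * (1 - cdf_nat r a).
  by rewrite ler_wpM2l //; lra.
have h2 : (1/2 - e / k%:R) * (1 - c) <= (1 - rho) * (1 - cdf_nat r a).
  by apply: ler_pM; rewrite /tau in rhot; lra.
have E : (1 - rho) * (1 - cdf_nat r a) = 1 - cdf_nat r a - rho * (1 - cdf_nat r a) by ring.
rewrite mulrC; lra.
Qed.

Lemma key2 : (forall j, (j < k)%N -> 0 < r j) -> Fcdf r y <= c + e.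
Proof.
hy; move=> rpos.
have c1 : c <= 1 := cdf_le1 _.
have ca0 : 0 <= cdf_nat r a := cdf_ge0 _.
have kR' := kR.
have := ca; have := ay.
case: (Fcdf_spec y) => [[_ ->]|[b [ib yb minb ->]]]; rewrite -/a => ay' ca'.
  lra.
have ab : a%:R < b%:R :> R by lra.
have ba0 : 0 < b%:R - a%:R :> R by lra.
have cb1 : cdf_nat r b <= 1 := cdf_le1 _.
have dab : 0 <= cdf_nat r b - cdf_nat r a.
  by apply: cdf_diff_ge0; rewrite -(ler_nat R) ltW.
set rho := (y - a%:R) / (b%:R - a%:R).
have rho0 : 0 <= rho by apply: divr_ge0; lra.
have rho1 : rho <= 1 by rewrite ler_pdivrMr // mul1r; lra.
have [bk|kb] := leqP b k.-1.
  have cb : cdf_nat r b <= c := cdf_mono bk.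
  have : rho * (cdf_nat r b - cdf_nat r a) <= cdf_nat r b - cdf_nat r a.
    by rewrite ler_piMl.
  lra.
have ik : interp_pt r k.-1.
  by rewrite /interp_pt rpos ?orbT // prednK // ltnW.
have ky : (k.-1)%:R <= y.
  rewrite leNgt; apply/negP => /(minb _ ik) => bk1.
  by have := leq_trans kb bk1; rewrite ltnn.
have aeq : a = k.-1.
  by apply/eqP; rewrite eqn_leq ak /= /a; apply: pb_max.
have kk := kk1.
have ba1 : 1 <= b%:R - a%:R :> R.
  rewrite aeq; have : (k.-1.+1 <= b)%N by [].
  rewrite -(ler_nat R) -natr1; lra.
have rhoe : rho <= y - a%:R.
  rewrite ler_pdivrMr //; rewrite -{1}(mulr1 (y - a%:R)).
  by apply: ler_wpM2l => //; lra.
have : rho * (cdf_nat r b - cdf_nat r a) <= rho by rewrite ler_piMr //; lra.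
rewrite aeq in rhoe; lra.
Qed.

End Key.

Lemma finv_tail (k : nat) (delta : R) : (2 <= k)%N -> 0 < delta ->
  (2%:E * Finv r (1 - delta / 6) <= k%:R%:E)%E ->
  (1 - cdf_nat r k.-1 <= delta / 3) /\
  ((forall j, (j < k)%N -> 0 < r j) -> 1 - cdf_nat r k.-1 <= delta / 6).
Proof.
move=> k2 d0 H.
have c0k : cdf_nat r 0 <= cdf_nat r k.-1 by apply: cdf_mono.
have c1 : cdf_nat r k.-1 <= 1 by apply: cdf_le1.
move: H; rewrite /Finv F0; case: ifP => [xlt _|xge].
  by split; [|move=> _]; lra.
case: ifP => [/eqP x1|xn1]; first by exfalso; lra.
set S := [set y : R | 0 <= y /\ Fcdf r y = 1 - delta / 6].
rewrite -EFinM lee_fin => Hinf.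
have x0ge : cdf_nat r 0 <= 1 - delta / 6 by rewrite leNgt xge.
have x0lt : 1 - delta / 6 < 1 by lra.
have [y0 [y00 Fy0]] := S_nonempty x0ge x0lt.
have hS : has_inf S.
  split; first by exists y0.
  by exists 0 => z [].
have kR : 2 <= k%:R :> R by rewrite ler_nat.
have step : forall eps, 0 < eps -> eps <= 1/2 ->
    exists y, [/\ 0 <= y, Fcdf r y = 1 - delta / 6 & y < k%:R / 2 + eps].
  move=> eps e0 e1; have [y [y0' Fy] yl] := inf_adherent e0 hS.
  by exists y; split => //; lra.
split.
  suff : (1 - cdf_nat r k.-1) / 2 <= delta / 6 by lra.
  apply/ler_addgt0Pr => eps e0.
  pose e' := Num.min eps (1/2).
  have e'0 : 0 < e' by rewrite /e' lt_min e0 /=; lra.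
  have e'1 : e' <= 1/2 by rewrite /e' ge_min lexx orbT.
  have e'e : e' <= eps by rewrite /e' ge_min lexx.
  have [y [y0' Fy yl]] := step _ e'0 e'1.
  have := key1 k2 e'0 e'1 y0' yl; rewrite Fy => h.
  have ek : e' / k%:R <= e'.
    by rewrite ler_pdivrMr; [nra | lra].
  have : (1 - cdf_nat r k.-1) * (e' / k%:R) <= e'.
    apply: le_trans ek; rewrite ler_piMl //; [apply: divr_ge0; lra | have := cdf_ge0 k.-1; lra].
  nra.
move=> rpos; suff : 1 - delta / 6 <= cdf_nat r k.-1 by lra.
apply/ler_addgt0Pr => eps e0.
pose e' := Num.min eps (1/2).
have e'0 : 0 < e' by rewrite /e' lt_min e0 /=; lra.
have e'1 : e' <= 1/2 by rewrite /e' ge_min lexx orbT.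
have e'e : e' <= eps by rewrite /e' ge_min lexx.
have [y [y0' Fy yl]] := step _ e'0 e'1.
have := key2 k2 e'0 e'1 y0' yl rpos; rewrite Fy => h.
lra.
Qed.

End Det.

Definition IA (k : nat) (A : {ffun 'I_k -> bool}) : seq nat :=
  [seq val i | i <- enum 'I_k & A i].

Lemma IA_uniq k (A : {ffun 'I_k -> bool}) : uniq (IA A).
Proof. by rewrite /IA (map_inj_uniq val_inj) filter_uniq // enum_uniq. Qed.

Lemma sum_IA (R : realType) k (A : {ffun 'I_k -> bool}) (f : nat -> R) :
  \sum_(j <- IA A) f j = \sum_(i < k | A i) f i.
Proof. by rewrite /IA big_map big_filter big_enum_cond. Qed.

Lemma sum_count_pred1 (s : seq nat) (I : seq nat) : uniq I ->
  (\sum_(i <- I) count (pred1 i) s)%N = count (mem I) s.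
Proof.
move=> uI; elim: s => [|a s IH] /=; first by rewrite big1.
rewrite big_split /= IH; congr (_ + _)%N.
rewrite -(count_uniq_mem a uI) -sum1_count [RHS]big_mkcond /=.
by apply: eq_bigr => i _; rewrite eq_sym; case: (a == i).
Qed.

Lemma sum_sub (R : realType) (T : eqType) (s1 s2 : seq T) (f : T -> R) :
  uniq s1 -> uniq s2 -> {subset s1 <= s2} -> (forall x, 0 <= f x) ->
  \sum_(x <- s1) f x <= \sum_(x <- s2) f x.
Proof.
move=> u1 u2 sub f0.
have P : perm_eq s1 [seq x <- s2 | x \in s1].
  apply: uniq_perm => //; first exact: filter_uniq.
  by move=> z; rewrite mem_filter; case: (boolP (z \in s1)) => // /sub ->.
rewrite (perm_big _ P) big_filter [X in _ <= X](bigID (mem s1)) /= lerDl.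
by apply: sumr_ge0.
Qed.

Section Emp.
Variables (R : realType) (n : nat) (x : n.-tuple nat).
Hypothesis n0 : (0 < n)%N.
Let q := @empirical R n x.
Definition Mx := (\max_(a <- x) a).+1.

Lemma q0 i : 0 <= q i.
Proof. by rewrite /q /empirical divr_ge0. Qed.

Lemma emp_sum (I : seq nat) : uniq I ->
  \sum_(i <- I) q i = (count (mem I) x)%:R / n%:R.
Proof.
by move=> uI; rewrite /q /empirical -mulr_suml -natr_sum sum_count_pred1.
Qed.

Lemma x_lt a : a \in x -> (a < Mx)%N.
Proof. by move=> ax; rewrite ltnS; apply: (leq_bigmax_seq a ax). Qed.

Lemma qM i : (Mx <= i)%N -> q i = 0.
Proof.
move=> Mi; rewrite /q /empirical.
have -> : count (pred1 i) x = 0%N.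
  apply/count_memPn; apply/negP => /x_lt; rewrite ltnNge Mi.
  by [].
by rewrite mul0r.
Qed.

Lemma q1 : \sum_(0 <= i < Mx) q i = 1.
Proof.
rewrite emp_sum ?iota_uniq //.
have -> : count (mem (index_iota 0 Mx)) x = n.
  rewrite -[RHS](size_tuple x) -count_predT; apply: eq_in_count => a ax.
  rewrite /= /index_iota subn0. by rewrite mem_iota add0n x_lt.
by rewrite divff // pnatr_eq0 -lt0n.
Qed.

End Emp.

Section Event.
Variables (R : realType) (p : nat -> R) (n : nat) (x : n.-tuple nat) (k : nat) (delta : R).
Hypotheses (p0 : forall i, 0 <= p i) (pN : forall N, \sum_(0 <= i < N) p i <= 1)
  (n0 : (0 < n)%N) (k2 : (2 <= k)%N) (d0 : 0 < delta).
Let q := @empirical R n x.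

Lemma event_incl :
  (delta%:E < l1dist q p)%E ->
  1 - cdf_nat q k.-1 <= delta / 3 ->
  ((forall j, (j < k)%N -> 0 < q j) -> 1 - cdf_nat q k.-1 <= delta / 6) ->
  exists A : {ffun 'I_k -> bool},
    [/\ A != [ffun=> false], A != [ffun=> true] & delta / 6 < \sum_(j <- IA A) (q j - p j)].
Proof.
move=> hl1 T1 T2; have d0' := d0.
have q0' : forall i, 0 <= q i := @q0 R n x.
have qM' : forall i, (Mx x <= i)%N -> q i = 0 := @qM R n x.
have q1' : \sum_(0 <= i < Mx x) q i = 1 := @q1 R n x n0.
rewrite /l1dist /esum in hl1.
have [_ [X [finX _] <-]] := ereal_sup_gt hl1.
rewrite fsbig_finite // sumEFin lte_fin.
set s := finmap.enum_fset (fset_set X) => hs.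
set N := ((\max_(i <- s) i).+1 + Mx x + k)%N.
have hsN : delta < \sum_(0 <= i < N) `|q i - p i|.
  apply: lt_le_trans hs _; apply: sum_sub => //.
  - exact: finmap.fset_uniq.
  - exact: iota_uniq.
  - move=> i iS; rewrite /index_iota subn0 mem_iota add0n /N.
    have : (i <= \max_(i <- s) i)%N by apply: (leq_bigmax_seq i iS).
    lia.
pose g i := if p i < q i then q i - p i else 0.
have gE : forall i, `|q i - p i| = 2 * g i - (q i - p i).
  move=> i; rewrite /g; case: ltP => h.
    rewrite ger0_norm; [lra | lra].
  rewrite ler0_norm; [lra | lra].
have gq : forall i, g i <= q i.
  by move=> i; rewrite /g; case: ltP => h; have := p0 i; have := q0' i; lra.
have sumq : \sum_(0 <= i < N) q i = 1.
  by apply: (sum_all (r := q) (M := Mx x)) => //; rewrite /N; lia.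
have sumgN : delta / 2 < \sum_(0 <= i < N) g i.
  move: hsN; rewrite (eq_bigr _ (fun i _ => gE i)) sumrB -mulr_sumr sumrB sumq.
  have := pN N; lra.
have ck : cdf_nat q k.-1 = \sum_(0 <= i < k) q i.
  by rewrite /cdf_nat prednK // ltnW.
have splitN : forall f : nat -> R, \sum_(0 <= i < N) f i = \sum_(0 <= i < k) f i + \sum_(k <= i < N) f i.
  by move=> f; rewrite (@big_cat_nat _ _ _ k 0 N) // /N; lia.
have tail : \sum_(k <= i < N) g i <= 1 - cdf_nat q k.-1.
  have := splitN q; rewrite sumq ck => e1.
  have : \sum_(k <= i < N) g i <= \sum_(k <= i < N) q i by apply: ler_sum => i _.
  lra.
pose A := [ffun i : 'I_k => p i < q i].
have sumA : \sum_(j <- IA A) (q j - p j) = \sum_(0 <= i < k) g i.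
  rewrite sum_IA big_mkord [LHS]big_mkcond /=.
  by apply: eq_bigr => i _; rewrite /A ffunE /g; case: ltP.
have sumgk : delta / 2 - (1 - cdf_nat q k.-1) < \sum_(0 <= i < k) g i.
  by move: sumgN; rewrite splitN; lra.
have k0 : (0 < k)%N by apply: ltnW.
case: (eqVneq A [ffun=> true]) => [Afull|Anf]; last first.
  exists A; split => //; last by rewrite sumA; lra.
  apply/eqP => Af; move: sumgk; rewrite -sumA sum_IA big1; first lra.
  by move=> i; rewrite Af ffunE.
have allpos : forall j, (j < k)%N -> 0 < q j.
  move=> j jk; have h := congr1 (fun f : {ffun 'I_k -> bool} => f (Ordinal jk)) Afull.
  rewrite /A !ffunE /= in h; apply: le_lt_trans (p0 j) _; by rewrite h.
have T2' := T2 allpos.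
pose A1 := [ffun i : 'I_k => val i == 0%N].
pose A2 := [ffun i : 'I_k => val i != 0%N].
have tot : \sum_(j <- IA A1) (q j - p j) + \sum_(j <- IA A2) (q j - p j) = \sum_(0 <= i < k) g i.
  rewrite -sumA !sum_IA (bigID (fun i : 'I_k => A1 i) (fun i => A i)) /=.
  congr (_ + _); apply: eq_bigl => i; rewrite Afull !ffunE //.
have ne1 : A1 != [ffun=> false].
  by apply/eqP => /(congr1 (fun f : {ffun 'I_k -> bool} => f (Ordinal k0))); rewrite !ffunE.
have nf1 : A1 != [ffun=> true].
  by apply/eqP => /(congr1 (fun f : {ffun 'I_k -> bool} => f (Ordinal k2))); rewrite !ffunE.
have ne2 : A2 != [ffun=> false].
  by apply/eqP => /(congr1 (fun f : {ffun 'I_k -> bool} => f (Ordinal k2))); rewrite !ffunE.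
have nf2 : A2 != [ffun=> true].
  by apply/eqP => /(congr1 (fun f : {ffun 'I_k -> bool} => f (Ordinal k0))); rewrite !ffunE.
case: (ltrP (delta / 6) (\sum_(j <- IA A1) (q j - p j))) => h1.
  by exists A1.
exists A2; split => //; lra.
Qed.

End Event.

Fixpoint alls (N n : nat) : seq (seq nat) :=
  if n is n'.+1 then [seq a :: s | a <- iota 0 N, s <- alls N n'] else [:: [::]].

Lemma alls_uniq N n : uniq (alls N n).
Proof.
elim: n => [//|n IH] /=; apply: allpairs_uniq => //; first exact: iota_uniq.
by move=> [a s] [b u] _ _ /= [-> ->].
Qed.

Lemma mem_alls N n (s : seq nat) : size s = n -> all (fun a => (a < N)%N) s -> s \in alls N n.
Proof.
elim: n s => [|n IH] [|a s] //= [sz] /andP[aN sN].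
by apply: allpairs_f; [rewrite mem_iota add0n | apply: IH].
Qed.

Lemma sum_alls (R : realType) N n (f : nat -> R) :
  \sum_(s <- alls N n) \prod_(a <- s) f a = (\sum_(a <- iota 0 N) f a) ^+ n.
Proof.
elim: n => [|n IH] /=; first by rewrite big_seq1 big_nil expr0.
rewrite big_allpairs_dep /= exprS big_distrl /=.
apply: eq_bigr => a _; rewrite -IH mulr_sumr; apply: eq_bigr => s _.
by rewrite big_cons.
Qed.

Lemma prod_if (R : realType) (I : seq nat) (E : R) (s : seq nat) :
  \prod_(a <- s) (if a \in I then E else 1) = E ^+ count (mem I) s.
Proof.
elim: s => [|a s IH] /=; first by rewrite big_nil expr0.
rewrite big_cons IH; case: (a \in I) => /=; by rewrite ?exprS ?mul1r ?add0n.
Qed.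

Lemma prod_cst (R : realType) (c : R) (s : seq nat) : \prod_(a <- s) c = c ^+ size s.
Proof. elim: s => [|a s IH]; by rewrite ?big_nil ?expr0 // big_cons IH exprS. Qed.

Section Chernoff.
Variables (R : realType) (p : nat -> R) (n : nat) (I : seq nat) (t : R).
Hypotheses (p0 : forall i, 0 <= p i) (pN : forall N, \sum_(0 <= i < N) p i <= 1)
  (n0 : (0 < n)%N) (uI : uniq I) (t0 : 0 < t).

Lemma my_chernoff (sF : seq (n.-tuple nat)) : uniq sF ->
  \sum_(x <- sF) (if t + \sum_(j <- I) p j < (count (mem I) x)%:R / n%:R then 1 else 0)
       * \prod_(i < n) p (tnth x i) <= expR (- (2 * n%:R * t ^+ 2)).
Proof.
move=> usF.
have p0' := p0; have t0' := t0.
set mu := \sum_(j <- I) p j.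
have mu0 : 0 <= mu by apply: sumr_ge0.
have mu1 : mu <= 1.
  apply: le_trans (pN (\max_(j <- I) j).+1); apply: sum_sub => //; first exact: iota_uniq.
  move=> j jI; rewrite /index_iota subn0 mem_iota add0n ltnS.
  exact: (leq_bigmax_seq j jI).
set lam := 4 * t.
set N := ((\max_(x <- sF) \max_(a <- x) a).+1 + (\max_(j <- I) j).+1)%N.
pose psi a := p a * (expR (- (lam * (mu + t))) * (if a \in I then expR lam else 1)).
have psi0 : forall a, 0 <= psi a.
  move=> a; rewrite /psi; apply: mulr_ge0 => //; apply: mulr_ge0; first exact: expR_ge0.
  by case: (a \in I) => //; apply: expR_ge0.
have pw : forall x : n.-tuple nat,
    (if t + mu < (count (mem I) x)%:R / n%:R then 1 else 0) * \prod_(i < n) p (tnth x i)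
    <= \prod_(a <- x) psi a.
  move=> x; have -> : \prod_(i < n) p (tnth x i) = \prod_(a <- x) p a by rewrite big_tuple.
  rewrite /psi big_split /= big_split /= prod_if.
  have W0 : 0 <= \prod_(a <- x) p a by apply: prodr_ge0.
  rewrite [X in _ <= X]mulrC; apply: ler_wpM2r => //.
  rewrite prod_cst size_tuple.
  rewrite -expRM_natl -expRM_natl -expRD.
  case: ifP => h /=; last exact: expR_ge0.
  apply: le_trans (expR_ge1Dx _); rewrite lerDl.
  have nR : 0 < n%:R :> R by rewrite ltr0n.
  move: h; rewrite ltr_pdivlMr // => h.
  have l0 : 0 < lam by rewrite /lam; lra.
  have := mulr_gt0 l0 (_ : 0 < (count (mem I) x)%:R - (t + mu) * n%:R); rewrite subr_gt0 => /(_ h).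
  move=> hh; nra.
apply: (@le_trans _ _ (\sum_(x <- sF) \prod_(a <- x) psi a)).
  by apply: ler_sum => x _; apply: pw.
have -> : \sum_(x <- sF) \prod_(a <- x) psi a = \sum_(s <- map val sF) \prod_(a <- s) psi a.
  by rewrite big_map.
apply: (@le_trans _ _ (\sum_(s <- alls N n) \prod_(a <- s) psi a)).
  apply: sum_sub.
  - by rewrite (map_inj_uniq val_inj).
  - exact: alls_uniq.
  - move=> s /mapP [x xsF ->]; apply: mem_alls; first exact: size_tuple.
    apply/allP => a ax.
    have h1 : (a <= \max_(a <- x) a)%N by apply: (leq_bigmax_seq a ax).
    have h2 : (\max_(a <- x) a <= \max_(x <- sF) \max_(a <- x) a)%N.
      by apply: (leq_bigmax_seq x xsF (F := fun x : n.-tuple nat => \max_(a <- x) a)).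
    rewrite /N; lia.
  - by move=> s; apply: prodr_ge0 => a _.
rewrite sum_alls.
have EE : forall a, psi a = expR (- (lam * (mu + t))) * (p a + (if a \in I then p a * (expR lam - 1) else 0)).
  by move=> a; rewrite /psi; case: (a \in I); ring.
have filt : \sum_(a <- iota 0 N | a \in I) p a = mu.
  rewrite -big_filter; apply: perm_big; apply: uniq_perm => //.
    by rewrite filter_uniq // iota_uniq.
  move=> a; rewrite mem_filter mem_iota add0n; case: (boolP (a \in I)) => //= aI.
  have : (a <= \max_(j <- I) j)%N by apply: (leq_bigmax_seq a aI).
  rewrite /N; lia.
have sumpsi : \sum_(a <- iota 0 N) psi a
    = expR (- (lam * (mu + t))) * (\sum_(a <- iota 0 N) p a + (expR lam - 1) * mu).
  rewrite (eq_bigr _ (fun a _ => EE a)) -mulr_sumr big_split -big_mkcond.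
  by rewrite -mulr_suml filt [mu * _]mulrC.
have pNN : \sum_(a <- iota 0 N) p a <= 1 by have := pN N; rewrite /index_iota subn0.
have l0 : 0 <= lam by rewrite /lam; lra.
have hoe := hoeff_lemma mu0 mu1 l0.
have B : \sum_(a <- iota 0 N) psi a <= expR (- (2 * t ^+ 2)).
  rewrite sumpsi.
  apply: (@le_trans _ _ (expR (- (lam * (mu + t))) * expR (mu * lam + lam * lam / 8))).
    apply: ler_wpM2l; first exact: expR_ge0.
    have : 0 <= (expR lam - 1) * mu.
      by apply: mulr_ge0 => //; have := expR_ge1Dx lam; lra.
    lra.
  rewrite -expRD ler_expR /lam; lra.
have S0 : 0 <= \sum_(a <- iota 0 N) psi a by apply: sumr_ge0.
apply: (@le_trans _ _ (expR (- (2 * t ^+ 2)) ^+ n)).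
  by apply: lerXn2r => //; rewrite nnegrE ?expR_ge0.
rewrite -expRM_natl; have -> : n%:R * - (2 * t ^+ 2) = - (2 * n%:R * t ^+ 2) by ring.
exact: lexx.
Qed.
End Chernoff.

Lemma card_nontriv k : (0 < k)%N ->
  #|[pred A : {ffun 'I_k -> bool} | (A != [ffun=> false]) && (A != [ffun=> true])]| = (2 ^ k - 2)%N.
Proof.
move=> k0.
have ft : ([ffun=> false] : {ffun 'I_k -> bool}) != [ffun=> true].
  by apply/eqP => /(congr1 (fun f : {ffun 'I_k -> bool} => f (Ordinal k0))); rewrite !ffunE.
have h1 := cardC1 ([ffun=> true] : {ffun 'I_k -> bool}).
have h2 := cardD1 ([ffun=> false] : {ffun 'I_k -> bool}) (predC1 [ffun=> true]).
rewrite card_ffun card_bool card_ord in h1.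
rewrite inE /= ft /= h1 in h2.
have E : #|[pred A : {ffun 'I_k -> bool} | (A != [ffun=> false]) && (A != [ffun=> true])]|
   = #|[predD1 predC1 ([ffun=> true] : {ffun 'I_k -> bool}) & [ffun=> false]]|.
  apply: eq_card => A; rewrite !inE; done.
rewrite E.
have : (1 < 2 ^ k)%N by rewrite -{1}(expn0 2) ltn_exp2l.
move=> h; have -> : (2 ^ k - 2 = (2 ^ k).-1 - 1)%N by lia.
by rewrite h2 addKn.
Qed.

Unset Implicit Arguments. Set Strict Implicit.

Theorem lemma4 (R : realType) (p : nat -> R) (delta : R) (k n : nat) :
  is_distr p -> 0 < delta -> (2 <= k)%N -> (0 < n)%N ->
  (iid_prob p
     [set x : n.-tuple nat |
        (delta%:E < l1dist (empirical x) p)%E /\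
        (2%:E * Finv (empirical x) (1 - delta / 6) <= k%:R%:E)%E]
   <= ((2 ^+ k - 2) * expR (- (n%:R * delta ^+ 2) / 18))%:E)%E.
Proof.
move=> [p0 p1] d0 k2 n0.
have pN : forall N, \sum_(0 <= i < N) p i <= 1.
  move=> N; rewrite -lee_fin -p1 -sumEFin; apply: esum_ge.
  exists [set` index_iota 0 N]; first by split => //; exact: finite_seq.
  by rewrite fsbig_seq // iota_uniq.
rewrite /iid_prob /esum; apply: ub_ereal_sup => _ [F [finF FE] <-].
rewrite fsbig_finite // sumEFin lee_fin.
set sF := finmap.enum_fset (fset_set F).
have usF : uniq sF by exact: finmap.fset_uniq.
pose P := [pred A : {ffun 'I_k -> bool} | (A != [ffun=> false]) && (A != [ffun=> true])].
pose cond (A : {ffun 'I_k -> bool}) (x : n.-tuple nat) :=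
  delta / 6 + \sum_(j <- IA A) p j < (count (mem (IA A)) x)%:R / n%:R.
pose w (x : n.-tuple nat) := \prod_(i < n) p (tnth x i).
have w0 : forall x, 0 <= w x by move=> x; apply: prodr_ge0.
apply: (@le_trans _ _ (\sum_(x <- sF) \sum_(A in P) (if cond A x then 1 else 0) * w x)).
  rewrite big_seq [X in _ <= X]big_seq; apply: ler_sum => x xs.
  have Fx : F x by apply: set_mem; rewrite -(in_fset_set finF); exact: xs.
  have [hl1 hfinv] := FE _ Fx.
  have q0' := @q0 R n x.
  have qM' := @qM R n x.
  have q1' := @q1 R n x n0.
  have [T1 T2] := finv_tail q0' qM' q1' k2 d0 hfinv.
  have [A [Ane Anf hA]] := event_incl p0 pN n0 k2 d0 hl1 T1 T2.
  rewrite (bigD1 A) /=; last by rewrite inE Ane Anf.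
  have -> : cond A x by rewrite /cond; move: hA; rewrite sumrB emp_sum ?IA_uniq //; lra.
  rewrite mul1r lerDl; apply: sumr_ge0 => B _; case: ifP => _; rewrite ?mul1r ?mul0r //.
rewrite exchange_big /=.
apply: (@le_trans _ _ (\sum_(A in P) expR (- (2 * n%:R * (delta / 6) ^+ 2)))).
  apply: ler_sum => A _.
  have d6 : 0 < delta / 6 by lra.
  exact: (my_chernoff p0 pN n0 (IA_uniq A) d6 usF).
rewrite sumr_const card_nontriv; last by apply: ltnW.
set ee := expR _.
have -> : ee *+ (2 ^ k - 2) = (2 ^ k - 2)%:R * ee by rewrite mulr_natl.
rewrite natrB; last by rewrite -{1}(expn1 2) leq_exp2l // ltnW.
rewrite natrX /ee.
have -> : - (2 * n%:R * (delta / 6) ^+ 2) = - (n%:R * delta ^+ 2) / 18 by field.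
exact: lexx.
Qed.
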